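(* Let $\vec{p'}=(p'_{kl})$ be a probability vector of length $N^2$ and $\mathcal{L}=\sum_{k,l}p'_{kl}\mathcal{L}_{kl}$ with $\mathcal{L}_{kl}=U_{kl}\otimes\overline{U}_{kl}-\mathbb{I}_{N^2}$. Then the $N\times N$ matrix $\mathcal{K}$ with entries $\mathcal{K}_{ij}=\langle ii|\mathcal{L}|jj\rangle$ (the decohered and reshaped diagonal of the reshuffled generator) equals $$\mathcal{K}=\sum_{k=0}^{N-1}q'_kX^k-\mathbb{I}_N=\sum_kq'_k\mathcal{K}_k,\qquad q'_k=\sum_lp'_{kl},\ \ \mathcal{K}_k=X^k-\mathbb{I}_N,$$ and $\mathcal{K}$ (as well as each $\mathcal{K}_k$) is a valid Kolmogorov operator: $\mathcal{K}_{ij}\ge0$ for $i\ne j$ and $\sum_i\mathcal{K}_{ij}=0$ for every $j$.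
   Context: Let $N\ge2$, $\omega=e^{2\pi i/N}$, $X|j\rangle=|j\oplus1\rangle$ (addition mod $N$), $Z=\mathrm{diag}(1,\omega,\dots,\omega^{N-1})$, Weyl unitaries $U_{kl}=X^kZ^l$. Superoperators are $N^2\times N^2$ matrices acting on $|A\rangle\rangle=\sum A_{ij}|i\rangle|j\rangle$, with $\rho\mapsto K\rho K^\dagger$ corresponding to $K\otimes\overline K$; $|ii\rangle=|i\rangle\otimes|i\rangle$. *)

(* Defs.v *)
From HB Require Import structures.
From mathcomp Require Import all_boot all_order all_algebra.
From mathcomp Require Import complex mxtens.
From mathcomp Require Import reals trigo.
Set Implicit Arguments. Unset Strict Implicit. Unset Printing Implicit Defensive.
Import Order.TTheory GRing.Theory Num.Theory.
Local Open Scope ring_scope.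
Local Open Scope complex_scope.

Section Weyl.
Variables (R : realType) (N : nat).
Local Notation C := R[i].

Definition omega : C := (cos (2 * pi / N%:R)) +i* (sin (2 * pi / N%:R)).

Definition shiftX : 'M[C]_N := \matrix_(i, j) ((i : nat) == (j.+1 %% N)%N)%:R.

Definition clockZ : 'M[C]_N := \matrix_(i, j) ((i == j)%:R * omega ^+ i).

Definition weylU (k l : 'I_N) : 'M[C]_N := shiftX ^+ k * clockZ ^+ l.

Definition conjmx (m n : nat) (A : 'M[C]_(m, n)) : 'M[C]_(m, n) :=
  map_mx (@conjc R) A.

Definition gen_kl (k l : 'I_N) : 'M[C]_(N * N) :=
  weylU k l *t conjmx (weylU k l) - 1%:M.

Definition gen (p : 'I_N -> 'I_N -> R) : 'M[C]_(N * N) :=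
  \sum_(k < N) \sum_(l < N) (p k l)%:C *: gen_kl k l.

(* K_ij = <ii| L |jj>,  with |ij> = |i> (x) |j> at index mxtens_index (i, j) *)
Definition reshaped_diag (L : 'M[C]_(N * N)) : 'M[C]_N :=
  \matrix_(i, j) L (mxtens_index (i, i)) (mxtens_index (j, j)).

Definition marg (p : 'I_N -> 'I_N -> R) (k : 'I_N) : R := \sum_(l < N) p k l.

End Weyl.

(* Kolmogorov operator (generator of a classical continuous-time Markov chain,
   column convention): off-diagonal entries nonnegative (hence real),
   column sums zero. *)
Definition kolmogorov (R : realType) (N : nat) (K : 'M[R[i]]_N) : Prop :=
  (forall i j : 'I_N, i != j -> 0 <= K i j) /\
  (forall j : 'I_N, \sum_(i < N) K i j = 0).

(* Main.v *)
Require Import Defs.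
From HB Require Import structures.
From mathcomp Require Import all_boot all_order all_algebra.
From mathcomp Require Import complex mxtens.
From mathcomp Require Import reals trigo.
Import Order.TTheory GRing.Theory Num.Theory.
Local Open Scope ring_scope.
Local Open Scope complex_scope.

Section H.
Variables (R : realType) (N : nat).
Local Notation C := R[i].

Lemma omegaJ : omega R N * (omega R N)^* = 1.
Proof.
rewrite /omega /= /GRing.mul /=.
apply/eqP; rewrite eq_complex /=; apply/andP; split; apply/eqP.
  by rewrite mulrN opprK -!expr2 cos2Dsin2.
by rewrite mulrN mulrC addNr.
Qed.

Lemma shiftXE (k : nat) (i j : 'I_N) :
  (shiftX R N ^+ k) i j = ((i : nat) == (j + k) %% N)%N%:R.
Proof.
elim: k i j => [|k IH] i j.
  rewrite expr0 mxE addn0 modn_small //.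

rewrite exprSr mxE.
have hN : (0 < N)%N by case: (j) => /= m; case: N => //.
have hj : (j.+1 %% N < N)%N by rewrite ltn_mod.
rewrite (bigD1 (Ordinal hj)) //= big1 ?addr0.
  rewrite IH !mxE eqxx mulr1 /=.
  by rewrite modnDml addSnnS.
move=> m hm; rewrite !mxE.
have -> : ((m : nat) == j.+1 %% N)%N = false.
  by apply/negbTE; move: hm; apply: contra => /eqP h; apply/eqP/val_inj.
by rewrite mulr0.
Qed.


Lemma clockZE (l : nat) (i j : 'I_N) :
  (clockZ R N ^+ l) i j = (i == j)%:R * omega R N ^+ (i * l).
Proof.
elim: l i j => [|l IH] i j.
  by rewrite expr0 !mxE muln0 expr0 mulr1.
rewrite exprSr mxE (bigD1 j) //= big1 ?addr0.
  rewrite IH !mxE eqxx mul1r mulnS addnC exprD.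
  by case: eqP => [->|]; rewrite ?mul0r ?mul1r.
move=> m hm; rewrite !mxE (negbTE hm) mul0r mulr0 //.
Qed.

Lemma weylUE (k l : 'I_N) (i j : 'I_N) :
  weylU R k l i j = ((i : nat) == (j + k) %% N)%N%:R * omega R N ^+ (j * l).
Proof.
rewrite /weylU mxE (bigD1 j) //= big1 ?addr0.
  by rewrite shiftXE clockZE eqxx mul1r.
by move=> m hm; rewrite clockZE (negbTE hm) mul0r mulr0.
Qed.


Lemma natJ (b : bool) : (b%:R : C)^* = b%:R.
Proof. exact: conjc_nat. Qed.

Lemma gen_klE (k l i j : 'I_N) :
  gen_kl R k l (mxtens_index (i, i)) (mxtens_index (j, j)) =
  (shiftX R N ^+ k) i j - (i == j)%:R.
Proof.
rewrite /gen_kl mxE tensmxE /conjmx (weylUE k l i j) [map_mx _ _ _ _]mxE (weylUE k l i j) shiftXE mxE [1%:M _ _]mxE.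
rewrite (inj_eq (can_inj (@mxtens_indexK _ _))) xpair_eqE andbb.
congr (_ - _).
rewrite rmorphM /= rmorphXn /= natJ.
rewrite mulrACA -exprMn omegaJ expr1n mulr1.
by case: eqP; rewrite ?mulr0 ?mulr1.
Qed.

Lemma colX (k : nat) (j : 'I_N) : \sum_(i < N) (shiftX R N ^+ k) i j = 1.
Proof.
have hN : (0 < N)%N by case: (j) => /= m; case: N => //.
have hj : ((j + k) %% N < N)%N by rewrite ltn_mod.
rewrite (bigD1 (Ordinal hj)) //= big1 ?addr0.
  by rewrite shiftXE eqxx.
move=> m hm; rewrite shiftXE.
have -> : ((m : nat) == (j + k) %% N)%N = false.
  by apply/negbTE; move: hm; apply: contra => /eqP h; apply/eqP/val_inj.
by [].
Qed.

Lemma Kentry (p : 'I_N -> 'I_N -> R)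
  (hp1 : \sum_(k < N) \sum_(l < N) p k l = 1) (i j : 'I_N) :
  reshaped_diag (gen p) i j =
  \sum_(k < N) (marg p k)%:C * (shiftX R N ^+ k) i j - (i == j)%:R.
Proof.
have hp1' : (\sum_(k < N) \sum_(l < N) p k l)%:C = 1 :> C by rewrite hp1.
rewrite /reshaped_diag /gen mxE summxE.
under eq_bigr do rewrite summxE.
under eq_bigr do under eq_bigr do rewrite mxE gen_klE.
rewrite [X in _ = _ - X](_ : _ = (i == j)%:R * (\sum_(k < N) \sum_(l < N) p k l)%:C); last by rewrite hp1' mulr1.
rewrite rmorph_sum mulr_sumr -sumrB.
apply: eq_bigr => k _.
rewrite /marg !rmorph_sum mulr_suml mulr_sumr -sumrB.
apply: eq_bigr => l _.
by rewrite mulrBr mulrC [_ * (_ == _)%:R]mulrC.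
Qed.

End H.

Theorem lemma3 (R : realType) (N : nat) (hN : (2 <= N)%N)
  (p : 'I_N -> 'I_N -> R)
  (hp0 : forall k l, 0 <= p k l)
  (hp1 : \sum_(k < N) \sum_(l < N) p k l = 1) :
  let K := reshaped_diag (gen p) in
  K = \sum_(k < N) (marg p k)%:C *: shiftX R N ^+ k - 1%:M /\
  K = \sum_(k < N) (marg p k)%:C *: (shiftX R N ^+ k - 1%:M) /\
  kolmogorov K /\
  (forall k : 'I_N, kolmogorov (shiftX R N ^+ k - 1%:M)).
Proof.
move=> K.
have hq : \sum_(k < N) (marg p k)%:C = 1 :> R[i].
  by rewrite -rmorph_sum /marg hp1.
have hq0 : forall k, 0 <= (marg p k)%:C :> R[i].
  by move=> k; rewrite ler0c /marg sumr_ge0.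
have hX0 : forall (k : nat) (i j : 'I_N), 0 <= (shiftX R N ^+ k) i j.
  by move=> k i j; rewrite shiftXE ler0n.
have E1 : K = \sum_(k < N) (marg p k)%:C *: shiftX R N ^+ k - 1%:M.
  apply/matrixP => i j; rewrite /K Kentry // !mxE summxE.
  by congr (_ - _); apply: eq_bigr => k _; rewrite mxE.
split => //.
split.
  rewrite E1; apply/matrixP => i j; rewrite !mxE !summxE.
  under eq_bigr do rewrite mxE.
  under [RHS]eq_bigr do rewrite !mxE.
  rewrite -[X in _ - X]mul1r -hq mulr_suml -sumrB.
  by apply: eq_bigr => k _; rewrite mulrBr.
split.
  split.
    move=> i j hij; rewrite /K Kentry // (negbTE hij) subr0.
    by apply: sumr_ge0 => k _; apply: mulr_ge0.
  move=> j.
  under eq_bigr do rewrite /K Kentry //.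
  rewrite sumrB exchange_big /=.
  under eq_bigr do rewrite -mulr_sumr colX mulr1.
  rewrite hq (bigD1 j) //= eqxx big1 ?addr0 ?subrr //.
  by move=> i hi; rewrite (negbTE hi).
move=> k; split.
  by move=> i j hij; rewrite !mxE (negbTE hij) subr0.
move=> j; under eq_bigr do rewrite !mxE.
rewrite sumrB colX (bigD1 j) //= eqxx big1 ?addr0 ?subrr //.
by move=> i hi; rewrite (negbTE hi).
Qed.
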